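(* Let $G$ be a plane graph containing no $3$-cycle, $4$-cycle and $5$-cycle that are pairwise adjacent, with a $3$-cycle $C_0$, $s\ge1$, a cover $H$ of $G$ with respect to $L(v)=\{1,\dots,s\}$ for all $v$, $F=(f_1,\dots,f_s)$ with $f_i(v)\in\{0,1,2\}$ and $f_1(v)+\cdots+f_s(v)\ge4$ for all $v$, and a DP-$F$-coloring $R_0$ of $C_0$ (with respect to the restriction of $H$) that cannot be extended to a DP-$F$-coloring of $(G,H)$; suppose $|V(G)|$ is minimum among all such counterexamples. Then $G$ has no separating $3$-cycles.
   Context: Two cycles are adjacent if they share an edge. A cycle $C$ of a plane graph is separating if there are vertices of $G$ both inside and outside $C$. A cover $H$ of $G$ w.r.t. $L$ has vertex set $\{(u,c):c\in L(u)\}$, each $\{u\}\times L(u)$ is a clique, for each edge $uv$ the edges between $\{u\}\times L(u)$ and $\{v\}\times L(v)$ form a matching, and there are no such edges for non-adjacent $u,v$. A representative set contains exactly one vertex of each $\{v\}\times L(v)$. A DP-$F$-coloring is a representative set $R$ admitting an ordering in which each $(v,i)\in R$ has fewer than $f_i(v)$ $H$-neighbors among earlier elements of $R$; extending $R_0$ means finding a DP-$F$-coloring of $(G,H)$ containing $R_0$. *)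

(* Defs.v *)
From mathcomp Require Import all_boot all_order all_algebra.
From mathcomp Require Import all_classical all_reals all_analysis.
From mathcomp Require Import Rstruct Rstruct_topology.
Set Implicit Arguments. Unset Strict Implicit. Unset Printing Implicit Defensive.
Import Order.TTheory GRing.Theory Num.Theory.
Import numFieldNormedType.Exports.

Definition simple_graph (V : finType) (G : rel V) : Prop :=
  symmetric G /\ irreflexive G.

Definition is_kcycle (V : finType) (G : rel V) (k : nat) (c : seq V) : bool :=
  [&& 3 <= k, size c == k, uniq c & cycle G c].

Definition cycle_edge (V : finType) (c : seq V) (x y : V) : bool :=
  ((x \in c) && (next c x == y)) || ((y \in c) && (next c y == x)).

Definition adjacent_cycles (V : finType) (c1 c2 : seq V) : Prop :=
  exists x y, cycle_edge c1 x y /\ cycle_edge c2 x y.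

Definition no_adjacent_345 (V : finType) (G : rel V) : Prop :=
  ~ exists c3 c4 c5, [/\ is_kcycle G 3 c3, is_kcycle G 4 c4, is_kcycle G 5 c5 &
        [/\ adjacent_cycles c3 c4, adjacent_cycles c3 c5 & adjacent_cycles c4 c5]].

(* Plane graphs: vertices are distinct points of R^2, each edge uv is a *)
(* Jordan arc from pos u to pos v; arcs meet only at common endpoints.  *)
Section Plane.
Variable R : realType.
Local Open Scope classical_set_scope.
Local Open Scope ring_scope.



Definition arc_img (g : R -> (R * R)%type) : set (R * R)%type := g @` `[(0:R), (1:R)].
Definition arc_open_img (g : R -> (R * R)%type) : set (R * R)%type := g @` `](0:R), (1:R)[.

Definition plane_embedding (V : finType) (G : rel V)
    (pos : V -> (R * R)%type) (arc : V -> V -> R -> (R * R)%type) : Prop :=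
  [/\ injective pos,
      (forall u v, G u v ->
        [/\ {within `[(0:R), (1:R)], continuous (arc u v)},
            {in `[(0:R), (1:R)] &, injective (arc u v)},
            arc u v 0 = pos u, arc u v 1 = pos v &
            arc_img (arc u v) = arc_img (arc v u)]),
      (forall u v w, G u v -> ~ arc_open_img (arc u v) (pos w)) &
      (forall u v x y, G u v -> G x y -> ~ (u = x /\ v = y) -> ~ (u = y /\ v = x) ->
         arc_open_img (arc u v) `&` arc_open_img (arc x y) = set0)].

Definition cycle_curve (V : finType) (arc : V -> V -> R -> (R * R)%type) (c : seq V)
  : set (R * R)%type := \bigcup_(x in [set x | x \in c]) arc_img (arc x (next c x)).

Definition bounded_pts (A : set (R * R)%type) : Prop :=
  exists M : R, forall p, A p -> `|p.1| <= M /\ `|p.2| <= M.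

Definition inside_curve (K : set (R * R)%type) (p : (R * R)%type) : Prop :=
  ~ K p /\ bounded_pts (connected_component (~` K) p).
Definition outside_curve (K : set (R * R)%type) (p : (R * R)%type) : Prop :=
  ~ K p /\ ~ bounded_pts (connected_component (~` K) p).

Definition separating_cycle (V : finType) (pos : V -> (R * R)%type)
    (arc : V -> V -> R -> (R * R)%type) (c : seq V) : Prop :=
  (exists w, inside_curve (cycle_curve arc c) (pos w)) /\
  (exists w, outside_curve (cycle_curve arc c) (pos w)).

End Plane.

(* DP-colouring.  Lists L(v) = {1,...,s} are represented by 'I_s        *)
(* (colour i+1 <-> ordinal i).  The cover H is a graph on pairs (v,c).  *)
Definition is_cover (V : finType) (G : rel V) (s : nat) (H : rel (V * 'I_s)) : Prop :=
  [/\ symmetric H, irreflexive H,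
      (forall u (c d : 'I_s), c != d -> H (u, c) (u, d)),
      (forall u v (c d : 'I_s), u != v -> H (u, c) (v, d) -> G u v) &
      (forall u v (c d d' : 'I_s), u != v ->
          H (u, c) (v, d) -> H (u, c) (v, d') -> d = d')].

(* A representative set R (exactly one vertex (v, phi v) of each fibre,
   for v in the vertex set S) is a DP-F-coloring if it admits an ordering
   in which each (v,i) in R has fewer than f_i(v) H-neighbours among the
   earlier elements of R. *)
Definition dpF_coloring (V : finType) (s : nat) (H : rel (V * 'I_s))
    (f : 'I_s -> V -> nat) (S : {set V}) (phi : V -> 'I_s) : Prop :=
  exists ord : seq V,
    [/\ uniq ord, ord =i S &
      forall (pre post : seq V) (v : V), ord = pre ++ v :: post ->
        count (fun u => H (v, phi v) (u, phi u)) pre < f (phi v) v].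

Definition counterexample (V : finType) (G : rel V)
    (pos : V -> (Rdefinitions.R * Rdefinitions.R)%type) (arc : V -> V -> Rdefinitions.R -> (Rdefinitions.R * Rdefinitions.R)%type)
    (c0 : seq V) (s : nat) (H : rel (V * 'I_s)) (f : 'I_s -> V -> nat)
    (phi0 : V -> 'I_s) : Prop :=
  [/\ simple_graph G, plane_embedding G pos arc, no_adjacent_345 G,
      is_kcycle G 3 c0 & 1 <= s] /\ [/\ is_cover G H,
      (forall v, (forall i, f i v <= 2) /\ 4 <= \sum_(i < s) f i v),
      dpF_coloring H f [set x in c0]%SET phi0 &
      ~ exists phi, dpF_coloring H f [set: V]%SET phi /\ {in c0, phi =1 phi0}].

Definition has_counterexample (V : finType) : Prop :=
  exists G pos arc c0 s H f phi0, @counterexample V G pos arc c0 s H f phi0.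

(* Main.v *)
Require Import Defs.
From mathcomp Require Import all_boot all_order all_algebra.
From mathcomp Require Import all_classical all_reals all_analysis.
From mathcomp Require Import Rstruct Rstruct_topology.
From Stdlib Require Import Classical.
Set Implicit Arguments. Unset Strict Implicit. Unset Printing Implicit Defensive.

Import Order.TTheory GRing.Theory Num.Theory.
Import numFieldNormedType.Exports.

Lemma split_cat (T : Type) (X Y pre post : seq T) v :
  X ++ Y = pre ++ v :: post ->
  (exists post', X = pre ++ v :: post') \/
  (exists pre', pre = X ++ pre' /\ Y = pre' ++ v :: post).
Proof.
elim: X pre => [|x X IH] pre /=; first by move=> ->; right; exists pre.
case: pre => [|p pre] /= [-> e]; first by left; exists X.
case: (IH _ e) => [[post' ->]|[pre' [-> ->]]]; first by left; exists post'.
by right; exists pre'.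
Qed.

Lemma map_split (A B : Type) (g : A -> B) s pre v post :
  map g s = pre ++ v :: post ->
  exists a u b, [/\ s = a ++ u :: b, map g a = pre & g u = v].
Proof.
elim: s pre => [|x s IH] [|p pre] //= [e1 e2].
  by exists [::], x, s.
have [a [u [b [-> <- <-]]]] := IH _ e2.
by exists (x :: a), u, b; rewrite /= e1.
Qed.

Lemma filter_split (T : Type) (P : pred T) s pre v post :
  seq.filter P s = pre ++ v :: post ->
  exists a b, s = a ++ v :: b /\ seq.filter P a = pre.
Proof.
elim: s pre => [|x s IH] pre /=; first by case: pre.
case: ifP => Px.
  case: pre => [|p pre] /= [e1 e2].
    by exists [::], s; rewrite e1.
  have [a [b [-> <-]]] := IH _ e2.
  by exists (x :: a), b; rewrite /= Px e1.
move=> e; have [a [b [-> <-]]] := IH _ e.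
by exists (x :: a), b; rewrite /= Px.
Qed.

Lemma mem_split_ex (T : eqType) (x : T) s : x \in s ->
  exists pre post, s = pre ++ x :: post.
Proof. by case/splitPr => p1 p2; exists p1, p2. Qed.

Lemma count_split (T : Type) (p q : pred T) s :
  count p s = count (predI p q) s + count (predI p (predC q)) s.
Proof.
elim: s => //= x s ->; case: (p x); case: (q x) => /=;
  rewrite ?add0n ?add1n ?addSn ?addnS //.
Qed.

Lemma map_val_pmap (T : eqType) (P : pred T) (sT : subType P) (s : seq T) :
  (forall x, x \in s -> P x) -> map val (pmap (insub : T -> option sT) s) = s.
Proof.
elim: s => //= x s IH H; rewrite insubT; first by apply: H; rewrite inE eqxx.
move=> Px /=; rewrite SubK IH // => y ys; apply: H; by rewrite inE ys orbT.
Qed.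

Section Sub.
Variables (V : finType) (S : {set V}).
Local Notation T := {x : V | x \in S}.

Lemma kcycle_sub (G : rel V) k (c : seq T) :
  is_kcycle (fun x y : T => G (val x) (val y)) k c = is_kcycle G k (map val c).
Proof.
by rewrite /is_kcycle size_map (map_inj_uniq val_inj) cycle_map.
Qed.

Lemma cedge_sub (c : seq T) x y : uniq c -> cycle_edge c x y ->
  cycle_edge (map val c) (val x) (val y).
Proof.
move=> uc; rewrite /cycle_edge !(mem_map val_inj) !(next_map val_inj uc).
by rewrite !(inj_eq val_inj).
Qed.

Lemma no345_sub (G : rel V) : no_adjacent_345 G ->
  no_adjacent_345 (fun x y : T => G (val x) (val y)).
Proof.
move=> no [c3 [c4 [c5 [k3 k4 k5 [a34 a35 a45]]]]]; apply: no.
have u3 : uniq c3 by case/and4P: k3.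
have u4 : uniq c4 by case/and4P: k4.
have u5 : uniq c5 by case/and4P: k5.
exists (map val c3), (map val c4), (map val c5).
rewrite -!kcycle_sub; split => //; split.
- case: a34 => x [y [h1 h2]]; exists (val x), (val y); split; exact: cedge_sub.
- case: a35 => x [y [h1 h2]]; exists (val x), (val y); split; exact: cedge_sub.
- case: a45 => x [y [h1 h2]]; exists (val x), (val y); split; exact: cedge_sub.
Qed.

Lemma simple_sub (G : rel V) : simple_graph G ->
  simple_graph (fun x y : T => G (val x) (val y)).
Proof. by case=> sy ir; split => [x y|x] /=; [exact: sy|exact: ir]. Qed.

Lemma plane_sub (R : realType) (G : rel V) pos (arc : V -> V -> R -> (R * R)%type) :
  plane_embedding G pos arc ->
  plane_embedding (fun x y : T => G (val x) (val y)) (fun x => pos (val x))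
     (fun x y => arc (val x) (val y)).
Proof.
case=> inj h2 h3 h4; split.
- by move=> x y /inj /val_inj.
- by move=> u v /h2.
- by move=> u v w /h3.
- move=> u v x y Guv Gxy n1 n2; apply: h4 => // -[e1 e2].
  + by apply: n1; split; apply: val_inj.
  + by apply: n2; split; apply: val_inj.
Qed.

End Sub.


Lemma card_sub_lt (V : finType) (S : {set V}) x : x \notin S ->
  #|{: {y : V | y \in S}}| < #|V|.
Proof.
move=> xS; rewrite card_sig.
have -> : #|[pred y | y \in S]| = #|S| by apply: eq_card => y.
rewrite -cardsT; apply: proper_card; rewrite properT.
by apply/eqP => eS; move: xS; rewrite eS inE.
Qed.

Lemma combine (V : finType) (G : rel V)
    (pos : V -> (Rdefinitions.R * Rdefinitions.R)%type)
    (arc : V -> V -> Rdefinitions.R -> (Rdefinitions.R * Rdefinitions.R)%type)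
    (c0 : seq V) (s : nat) (H : rel (V * 'I_s)) (f : 'I_s -> V -> nat)
    (phi0 : V -> 'I_s) (c : seq V) (A B : {set V}) :
  counterexample G pos arc c0 H f phi0 ->
  (forall V' : finType, has_counterexample V' -> #|V| <= #|V'|) ->
  is_kcycle G 3 c ->
  (forall x, x \in A -> x \notin B) ->
  (forall x, x \in c -> x \notin A /\ x \notin B) ->
  (forall u w, u \in A -> w \in B -> ~ G w u) ->
  (forall x, [|| x \in A, x \in B | x \in c]) ->
  (exists a, a \in A) -> (exists b, b \in B) ->
  (forall x, x \in c0 -> x \notin B) -> False.
Proof.
move=> [[sg pe no345 kc0 s1] [cov fb dp0 noext]] minim kc dAB dc GAB cover
  [a aA] [b bB] c0B.
have [Hsym Hirr Hcl Hadj Hmat] := cov.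
pose S1 := ~: B.
pose G1 := fun x y : {x : V | x \in S1} => G (val x) (val y).
pose H1 := fun p q : {x : V | x \in S1} * 'I_s => H (val p.1, p.2) (val q.1, q.2).
pose f1 := fun i (x : {x : V | x \in S1}) => f i (val x).
pose phi01 := fun x : {x : V | x \in S1} => phi0 (val x).
pose c01 := pmap (insub : V -> option {x : V | x \in S1}) c0.
have c0S1 : forall x, x \in c0 -> x \in S1 by move=> x /c0B; rewrite inE.
have ec01 : map val c01 = c0 by apply: map_val_pmap.
have [phi1' [dp1 ag1]] : exists phi, dpF_coloring H1 f1 [set: {x : V | x \in S1}]%SET phi
     /\ {in c01, phi =1 phi01}.
  apply: NNPP => hne.
  have : ~ has_counterexample {x : V | x \in S1}.
    by move/minim; rewrite leqNgt (card_sub_lt (x := b)) ?inE ?bB.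
  apply; exists G1, (fun x => pos (val x)),
    (fun x y => arc (val x) (val y)), c01, s, H1, f1, phi01.
  split; split => //.
  - exact: simple_sub.
  - exact: plane_sub.
  - exact: no345_sub.
  - by rewrite kcycle_sub ec01.
  - split.
    + by move=> p q; rewrite /H1 Hsym.
    + by move=> p; rewrite /H1 Hirr.
    + by move=> u x y xy; rewrite /H1 Hcl.
    + by move=> u v x y uv; apply: Hadj; rewrite (inj_eq val_inj).
    + by move=> u v x y y' uv; apply: Hmat; rewrite (inj_eq val_inj).
  - by move=> v; apply: fb.
  - case: dp0 => ord0 [u0 m0 h0].
    exists (pmap insub ord0); split.
    + exact: pmap_sub_uniq.
    + by move=> x; rewrite mem_pmap_sub m0 !inE mem_pmap_sub.
    + move=> pre post v e.
      have e' : ord0 = map val pre ++ val v :: map val post.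
        have e2 : map val (pmap insub ord0 : seq {x : V | x \in S1}) = ord0.
          by apply: map_val_pmap => x; rewrite m0 inE; apply: c0S1.
        by rewrite -e2 e map_cat.
      by have := h0 _ _ _ e'; rewrite count_map.
have s2 : 2 <= s.
  have [_ h] := fb a.
  have : \sum_(i < s) f i a <= \sum_(i < s) 2 by apply: leq_sum => i _; case: (fb a) => ->.
  rewrite sum_nat_const card_ord => h'; have := leq_trans h h'.
  rewrite ltnNge => /negP hn; rewrite leqNgt; apply/negP => hs; apply: hn.
  have hs' : s <= 1 by [].
  exact: leq_trans (leq_mul hs' (leqnn 2)) _.
pose phi1 := fun v : V => if (insub v : option {x : V | x \in S1}) is Some u then phi1' u else phi0 v.
have phi1_val : forall u : {x : V | x \in S1}, phi1 (val u) = phi1' u.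
  by move=> u; rewrite /phi1 valK.
pose S2 := ~: A.
pose H2 := fun p q : {x : V | x \in S2} * 'I_s.+1 =>
  if p.1 == q.1 then p.2 != q.2 else
  if (val p.1 \in c) && (val q.1 \in c) then false else
  match unlift ord_max p.2, unlift ord_max q.2 with
  | Some i, Some j => H (val p.1, i) (val q.1, j)
  | _, _ => false end.
pose f2 := fun (i : 'I_s.+1) (x : {x : V | x \in S2}) =>
  if val x \in c then (if i == lift ord_max (phi1 (val x)) then 1 else 2)
  else if unlift ord_max i is Some i' then f i' (val x) else 0.
pose phi02 := fun x : {x : V | x \in S2} => lift ord_max (phi1 (val x)).
have cS2 : forall x, x \in c -> x \in S2 by move=> x /dc [h _]; rewrite inE h.
pose c02 := pmap (insub : V -> option {x : V | x \in S2}) c.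
have ec02 : map val c02 = c by apply: map_val_pmap.
have [phi2 [[ord2 [u2 m2 dp2]] ag2]] : exists phi,
     dpF_coloring H2 f2 [set: {x : V | x \in S2}]%SET phi /\ {in c02, phi =1 phi02}.
  apply: NNPP => hne.
  have : ~ has_counterexample {x : V | x \in S2}.
    by move/minim; rewrite leqNgt (card_sub_lt (x := a)) ?inE ?aA.
  apply; exists (fun x y : {x : V | x \in S2} => G (val x) (val y)), (fun x => pos (val x)),
    (fun x y => arc (val x) (val y)), c02, s.+1, H2, f2, phi02.
  split; split => //.
  - exact: simple_sub.
  - exact: plane_sub.
  - exact: no345_sub.
  - by rewrite kcycle_sub ec02.
  - split.
    + move=> [x i] [y j]; rewrite /H2 /= eq_sym [i == j]eq_sym andbC.
      case: eqP => // _.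
      by case: (unlift ord_max i) => [i'|]; case: (unlift ord_max j) => [j'|] //; rewrite Hsym.
    + by move=> [x i]; rewrite /H2 /= !eqxx.
    + by move=> u x y xy; rewrite /H2 /= eqxx.
    + move=> u v x y uv; rewrite /H2 /= (negPf uv).
      case: ifP => // _.
      case: (unlift ord_max x) => [i'|] //; case: (unlift ord_max y) => [j'|] // h.
      by apply: Hadj h; rewrite (inj_eq val_inj).
    + move=> u v x y y' uv; rewrite /H2 /= (negPf uv); case: ifP => // _.
      case: (unlift ord_max x) => [x'|] //.
      case: (unliftP ord_max y) => [j ->|->]; last by idtac.
      case: (unliftP ord_max y') => [j' ->|->]; last by [].
      move=> h h'.
      by rewrite (Hmat (val u) (val v) x' j j') // (inj_eq val_inj).
  - move=> v; split.
    + move=> i; rewrite /f2; case: ifP => _; first by case: ifP.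
      by case: (unlift ord_max i) => [i'|] //; case: (fb (val v)) => ->.
    + have ew : forall i : 'I_s, widen_ord (leqnSn s) i = lift ord_max i.
        by move=> i; apply: val_inj; rewrite /= /bump leqNgt ltn_ord.
      rewrite big_ord_recr /= /f2; case: ifP => vc.
      * rewrite (negbTE (neq_lift _ _)).
        have : \sum_(i < s) 1 <= \sum_(i < s)
            (if widen_ord (leqnSn s) i == lift ord_max (phi1 (val v)) then 1 else 2).
          by apply: leq_sum => i _; case: ifP.
        rewrite sum_nat_const card_ord muln1 => hh.
        apply: leq_trans (leq_add hh (leqnn 2)).
        by rewrite -[4]/(2+2) leq_add2r.
      * rewrite unlift_none addn0.
        under eq_bigr => i _ do rewrite ew liftK.
        by case: (fb (val v)).
  - have uc02 : uniq c02 by apply: pmap_sub_uniq; case/and4P: kc.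
    exists c02; split.
    + exact: uc02.
    + by move=> x; rewrite inE.
    + move=> pre post v e.
      have vc : val v \in c by rewrite -mem_pmap_sub -/c02 e mem_cat inE eqxx orbT.
      have vpre : v \notin pre.
        move: uc02; rewrite e cat_uniq => /and3P [_ /hasPn h _]; exact: h v (mem_head _ _).
      rewrite (@eq_in_count _ _ pred0) ?count_pred0.
        by rewrite /f2 vc /phi02 eqxx.
      move=> w wpre /=; rewrite /H2 /=.
      have -> : (v == w) = false by apply/negP => /eqP ew; move: vpre; rewrite ew wpre.
      have wc : val w \in c by rewrite -mem_pmap_sub -/c02 e mem_cat wpre.
      by rewrite vc wc.
have S2cases : forall u : {x : V | x \in S2}, (val u \in B) || (val u \in c).
  move=> u; have := valP u; rewrite inE => uA.
  by have := cover (val u); rewrite (negbTE uA).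
pose phi2' := fun u : {x : V | x \in S2} =>
  if unlift ord_max (phi2 u) is Some i then i else phi0 (val u).
pose phi := fun v : V => if v \in B then
   (if (insub v : option {x : V | x \in S2}) is Some u then phi2' u else phi0 v)
   else phi1 v.
have phi2_c : forall u, val u \in c -> phi2 u = lift ord_max (phi1 (val u)).
  by move=> u uc; rewrite ag2 // mem_pmap_sub.
have phi2_nc : forall u, val u \notin c -> exists i, phi2 u = lift ord_max i.
  move=> u uc; have : u \in ord2 by rewrite m2 inE.
  case/mem_split_ex => pre [post e]; have := dp2 _ _ _ e.
  rewrite /f2 (negbTE uc).
  case: (unliftP ord_max (phi2 u)) => [j ->|->]; first by move=> _; exists j.
  by rewrite ltn0.
have phi_val2 : forall u, phi2 u = lift ord_max (phi (val u)).
  move=> u; case/orP: (S2cases u) => h.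
  - have uc : val u \notin c by apply/negP => /dc [_]; rewrite h.
    have [i ei] := phi2_nc u uc.
    by rewrite /phi h valK /phi2' ei liftK.
  - by rewrite phi2_c // /phi; have [_ /negbTE ->] := dc _ h.
have phi_1 : forall u : {x : V | x \in S1}, phi (val u) = phi1' u.
  move=> u; have := valP u; rewrite inE => uB.
  by rewrite /phi (negbTE uB) phi1_val.
have FH2 : forall u w, H2 (u, phi2 u) (w, phi2 w) =
   [&& u != w, ~~ ((val u \in c) && (val w \in c)) &
       H (val u, phi (val u)) (val w, phi (val w))].
  move=> u w; rewrite /H2 /= !phi_val2 !liftK.
  case: (eqVneq u w) => [->|uw] /=; first by rewrite eqxx.
  by case: ifP.
have Ff2 : forall u, f2 (phi2 u) u = if val u \in c then 1 else f (phi (val u)) (val u).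
  move=> u; rewrite /f2 phi_val2; case: ifP => uc; last by rewrite liftK.
  by rewrite /phi; have [_ /negbTE ->] := dc _ uc; rewrite eqxx.
case: dp1 => ord1 [u1 m1 dp1'].
pose Pb := fun u : {x : V | x \in S2} => val u \in B.
apply: noext; exists phi; split.
  exists (map val ord1 ++ map val (seq.filter Pb ord2)); split.
  - rewrite cat_uniq !(map_inj_uniq val_inj) u1 filter_uniq // andbT /=.
    apply/hasPn => x /mapP [w]; rewrite mem_filter => /andP [wB _] ->.
    apply/negP => /mapP [u _ e]; have := valP u; rewrite inE => /negP; apply.
    have e2 : (val u : V) = val w := esym e.
    by rewrite e2.
  - move=> x; rewrite inE mem_cat; case: (boolP (x \in B)) => xB.
    + apply/orP; right.
      have xS2 : x \in S2 by rewrite inE; apply/negP => /dAB; rewrite xB.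
      apply/mapP; exists (Sub x xS2 : {x : V | x \in S2}); last by rewrite SubK.
      by rewrite mem_filter /Pb SubK xB m2 inE.
    + apply/orP; left.
      have xS1 : x \in S1 by rewrite inE xB.
      apply/mapP; exists (Sub x xS1 : {x : V | x \in S1}); last by rewrite SubK.
      by rewrite m1 inE.
  - move=> pre post v e.
    case: (split_cat e) => [[post' e1]|[pre' [epre e2]]].
      have [a' [u [b' [eo ea eu]]]] := map_split e1.
      have := dp1' _ _ _ eo; rewrite -ea -eu count_map /f1 phi_1.
      congr (_ < _); apply: eq_count => w /=; by rewrite !phi_1.
    have [a' [u [b' [ef ea eu]]]] := map_split e2.
    have [la [lb [eo ef']]] := filter_split ef.
    have uB : val u \in B.
      have : u \in a' ++ u :: b' by rewrite mem_cat mem_head orbT.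
      by rewrite -ef mem_filter => /andP [].
    have uc : val u \notin c by apply/negP => /dc [_]; rewrite uB.
    have ua : u \notin la.
      by move: u2; rewrite eo cat_uniq => /and3P [_ /hasPn h _]; exact: h u (mem_head _ _).
    pose pv := fun w : V => H (val u, phi (val u)) (w, phi w).
    have := dp2 _ _ _ eo; rewrite Ff2 (negbTE uc).
    rewrite (@eq_in_count _ _ (fun w => pv (val w))); last first.
      move=> w wa; rewrite FH2 (negbTE uc) /=.
      have -> : (u != w) by apply/negP => /eqP ew; move: ua; rewrite ew wa.
      by [].
    rewrite (count_split _ Pb) => hc.
    rewrite epre -eu count_cat -ea -ef' (@count_map _ _ val _ (seq.filter Pb la)) count_filter.
    apply: leq_ltn_trans hc; rewrite addnC leq_add2l.
    rewrite -size_filter.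
    have us1 : uniq (seq.filter pv (map val ord1)).
      by apply: filter_uniq; rewrite (map_inj_uniq val_inj).
    suff sub : {subset seq.filter pv (map val ord1) <=
        map val (seq.filter (predI (fun w => pv (val w)) (predC Pb)) la)}.
      apply: leq_trans (uniq_leq_size us1 sub) _.
      by rewrite size_map size_filter.
    move=> x; rewrite mem_filter => /andP [px /mapP [w1 _ xw1]].
    have w1B : x \notin B by have := valP w1; rewrite inE xw1.
    have ux : val u != x by apply/negP => /eqP ux; move: w1B; rewrite -ux uB.
    have Gux : G (val u) x by apply: (Hadj _ _ _ _ ux px).
    have xA : x \notin A by apply/negP => xA; exact: GAB _ _ xA uB Gux.
    have xc : x \in c by have := cover x; rewrite (negbTE xA) (negbTE w1B).
    have xS2 : x \in S2 by rewrite inE.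
    have [w wv] : exists w : {x : V | x \in S2}, val w = x.
      by exists (Sub x xS2); rewrite SubK.
    have wa : w \in la.
      have : w \in ord2 by rewrite m2 inE.
      rewrite eo mem_cat inE => /orP [//|/orP [/eqP wu|wb]].
        by move: uc; rewrite -wu wv xc.
      exfalso; have [b1 [b2 eb]] := mem_split_ex wb.
      have eo2 : ord2 = (la ++ u :: b1) ++ w :: b2 by rewrite eo eb -catA.
      have := dp2 _ _ _ eo2; rewrite Ff2 wv xc count_cat /= FH2 wv xc (negbTE uc) /=.
      have -> : w != u by apply/negP => /eqP wu; move: uc; rewrite -wu wv xc.
      by rewrite Hsym -/(pv x) px /= addnC addSn.
    apply/mapP; exists w; last by rewrite wv.
    rewrite mem_filter wa andbT; apply/andP; split; last by rewrite /= /Pb wv w1B.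
    rewrite /= wv; exact: px.
move=> x xc0; have xB := c0B _ xc0.
have xS1 : x \in S1 by rewrite inE xB.
have := phi_1 (Sub x xS1); rewrite SubK => ->.
by rewrite ag1 /phi01 ?SubK // mem_pmap_sub SubK.
Qed.

Section Top.
Local Open Scope classical_set_scope.
Local Open Scope ring_scope.
Variables (R : realType) (V : finType) (G : rel V) (pos : V -> (R * R)%type)
  (arc : V -> V -> R -> (R * R)%type).
Hypothesis PE : plane_embedding G pos arc.
Variable c : seq V.
Hypothesis cyc : cycle G c.
Let K := cycle_curve arc c.

Lemma in01_0 : `[(0:R), (1:R)]%classic 0.
Proof. by rewrite /= in_itv /= lexx ler01. Qed.
Lemma in01_1 : `[(0:R), (1:R)]%classic 1.
Proof. by rewrite /= in_itv /= lexx ler01. Qed.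

Lemma K_on x : x \in c -> K (pos x).
Proof.
move=> xc; case: PE => _ Harc _ _.
have [_ _ H0 _ _] := Harc _ _ (next_cycle cyc xc).
exists x => //; exists 0; first exact: in01_0.
by rewrite H0.
Qed.

Lemma itv_cases (t : R) : `[(0:R), (1:R)]%classic t ->
  t = 0 \/ t = 1 \/ `](0:R), (1:R)[%classic t.
Proof.
rewrite /= !in_itv /= => /andP[t0 t1].
have [->|n0] := eqVneq t 0; first by left.
have [->|n1] := eqVneq t 1; first by right; left.
by right; right; rewrite lt_neqAle eq_sym n0 t0 lt_neqAle n1 t1.
Qed.

Lemma notK_notin w : w \notin c -> ~ K (pos w).
Proof.
move=> wc [x xc [t t01 ht]].
case: PE => inj Harc H3 _.
have Gxy := next_cycle cyc xc.
have [_ _ H0 H1 _] := Harc _ _ Gxy.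
case: (itv_cases t01) => [t0|[t1|to]].
- by move: ht; rewrite t0 H0 => /inj ex; move: wc; rewrite -ex xc.
- move: ht; rewrite t1 H1 => /inj ex; move: wc; rewrite -ex.
  by rewrite mem_next xc.
- by apply: (H3 _ _ w Gxy); exists t.
Qed.

Lemma comp_eq u w : G u w -> ~ K (pos u) -> ~ K (pos w) ->
  connected_component (~` K) (pos u) = connected_component (~` K) (pos w).
Proof.
move=> Guw Ku Kw.
case: PE => inj Harc H3 H4.
have [cont _ Hu0 Hw1 _] := Harc _ _ Guw.
have cS : connected (arc_img (arc u w)).
  apply: connected_continuous_connected => //.
  apply/connected_intervalP; exact: interval_is_interval.
have uc : u \notin c by apply/negP => /K_on.
have SK : arc_img (arc u w) `<=` ~` K.
  move=> p [t t01 <-] [x xc [t' t'01 ht']].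
  have Gxy := next_cycle cyc xc.
  have [_ _ H0 H1 _] := Harc _ _ Gxy.
  case: (itv_cases t01) => [t0|[t1|to]].
  - by apply: Ku; rewrite -Hu0 -t0; exists x => //; exists t'.
  - by apply: Kw; rewrite -Hw1 -t1; exists x => //; exists t'.
  case: (itv_cases t'01) => [t0|[t1|to']].
  - by apply: (H3 _ _ x Guw); exists t => //; rewrite -H0 -t0.
  - by apply: (H3 _ _ (next c x) Guw); exists t => //; rewrite -H1 -t1.
  have ux : u <> x by move=> ex; move: uc; rewrite ex xc.
  have uy : u <> next c x by move=> ex; move: uc; rewrite ex mem_next xc.
  have := H4 _ _ _ _ Guw Gxy (fun h => ux h.1) (fun h => uy h.1).
  move/seteqP => [/(_ (arc u w t)) h _]; apply: h; split; first by exists t.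
  by exists t'.
have := connected_component_max (x := pos u) _ SK cS.
have pu : arc_img (arc u w) (pos u) by exists 0; [exact: in01_0|].
have pw : arc_img (arc u w) (pos w) by exists 1; [exact: in01_1|].
move=> /(_ pu) sub; apply: same_connected_component; exact: sub.
Qed.

Lemma no_in_out u w : G u w -> inside_curve K (pos u) -> outside_curve K (pos w) -> False.
Proof.
move=> Guw [Ku bu] [Kw bw]; apply: bw; by rewrite -(comp_eq Guw Ku Kw).
Qed.

End Top.

Lemma tri_adj (V : finType) (G : rel V) (c : seq V) x y :
  simple_graph G -> is_kcycle G 3 c -> x \in c -> y \in c -> x != y -> G x y.
Proof.
move=> [sy _] /and4P [_ /eqP sz _ cy].
case: c sz cy => [|p [|q [|r [|]]]] //= _.
rewrite !andbT => /and3P [pq qr rp].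
rewrite !inE => /or3P [] /eqP -> /or3P [] /eqP -> //; rewrite ?eqxx // => _;
  by rewrite ?pq ?qr ?rp // sy ?pq ?qr ?rp.
Qed.

Theorem lemma6 (V : finType) (G : rel V)
    (pos : V -> (Rdefinitions.R * Rdefinitions.R)%type)
    (arc : V -> V -> Rdefinitions.R -> (Rdefinitions.R * Rdefinitions.R)%type)
    (c0 : seq V) (s : nat) (H : rel (V * 'I_s)) (f : 'I_s -> V -> nat)
    (phi0 : V -> 'I_s) :
  counterexample G pos arc c0 H f phi0 ->
  (forall V' : finType, has_counterexample V' -> #|V| <= #|V'|) ->
  ~ exists c, is_kcycle G 3 c /\ separating_cycle pos arc c.
Proof.
move=> ce minim [c [kc [[win inw] [wout outw]]]].
have ce' := ce; case: ce' => [[sg pe no345 kc0 s1] _].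
have cyc : cycle G c by case/and4P: kc.
pose K := cycle_curve arc c.
pose In := [set w | `[< inside_curve K (pos w) >]].
pose Out := [set w | (w \notin c) && ~~ `[< inside_curve K (pos w) >]].
have In_nc : forall w, w \in In -> w \notin c.
  move=> w; rewrite inE => /asboolP [nK _]; apply/negP => wc.
  exact: nK (K_on pe cyc wc).
have GIO : forall u w, u \in In -> w \in Out -> ~ G u w.
  move=> u w; rewrite !inE => iu0 /andP [wc niw0] Guw.
  have iu : inside_curve K (pos u) by [].
  have niw : ~ inside_curve K (pos w) by apply/asboolPn.
  have := no_in_out pe cyc Guw iu; apply; split; first exact: (notK_notin pe cyc wc).
  move=> bw; apply: niw; split; [exact: (notK_notin pe cyc wc) | exact: bw].
have dIO : forall x, x \in In -> x \notin Out.
  move=> x; rewrite !inE => xI; by rewrite (asboolT xI) andbF.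
have coverIO : forall x, [|| x \in In, x \in Out | x \in c].
  move=> x; rewrite !inE; case: (x \in c); rewrite ?orbT //.
  by case: `[< _ >].
have winI : win \in In by rewrite inE; apply/asboolP.
have woutO : wout \in Out.
  have [nK nb] := outw.
  rewrite inE; apply/andP; split.
    by apply/negP => wc; apply: nK; exact: (K_on pe cyc wc).
  by apply/asboolPn => -[_ b].
have [[x0 x0c0 x0I]|nh] := altP (@hasP _ (fun x => x \in In) c0).
  apply: (@combine V G pos arc c0 s H f phi0 c In Out) => //.
  - by move=> x xc; split; [apply/negP => /In_nc; rewrite xc | rewrite inE xc].
  - by move=> u w uI wO Gwu; apply: GIO uI wO _; rewrite (proj1 sg).
  - by exists win.
  - by exists wout.
  - move=> x xc0; case: (eqVneq x x0) => [->|xx0]; first exact: dIO.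
    apply/negP => xO; apply: GIO x0I xO _.
    by apply: tri_adj kc0 x0c0 xc0 _ => //; rewrite eq_sym.
apply: (@combine V G pos arc c0 s H f phi0 c Out In) => //.
- by move=> x xO; apply/negP => xI; move: (dIO _ xI); rewrite xO.
- by move=> x xc; split; [rewrite inE xc | apply/negP => /In_nc; rewrite xc].
- by move=> u w uO wI Gwu; apply: GIO wI uO Gwu.
- by move=> x; have := coverIO x; case: (x \in In); case: (x \in Out); rewrite ?orbT.
- by exists wout.
- by exists win.
- by move/hasPn: nh => nh x /nh.
Qed.
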